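(* Let $D$ be a real division algebra with $\dim_{\mathbb{R}} D \geq 2$, and let $n \geq 0$. Let \[ f_n : D^n \times D^n \to D^n,\quad ((a_1,\ldots,a_n),(b_1,\ldots,b_n)) \mapsto (a_1 b_1, \ldots, a_n b_n) \] be componentwise multiplication, regarded as an $\mathbb{R}$-bilinear map. Then $Q(f_n) \leq n d$, where $d = \tfrac{1}{2}\dim_{\mathbb{R}} D$.
   Context: A real division algebra is a finite-dimensional real vector space $D$ with an $\mathbb{R}$-bilinear multiplication $D \times D \to D$, $(a,b)\mapsto ab$, such that for every nonzero $a \in D$ the left multiplication $b \mapsto ab$ is invertible; no associativity or other conditions are imposed. For an $\mathbb{R}$-bilinear map $f : U \times V \to W$ between finite-dimensional real vector spaces, its subrank $Q(f)$ is the largest $r$ such that there exist $\mathbb{R}$-linear maps $\varphi_1 : \mathbb{R}^r \to U$, $\varphi_2 : \mathbb{R}^r \to V$, $\varphi_3 : W \to \mathbb{R}^r$ with $\varphi_3(f(\varphi_1(a), \varphi_2(b))) = (a_1b_1,\ldots,a_rb_r)$ for all $a,b \in \mathbb{R}^r$ (equivalently, the subrank of the corresponding tensor in $U^*\otimes V^*\otimes W$). *)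

(* Defs.v *)
From HB Require Import structures.
From mathcomp Require Import all_boot all_order all_algebra.
From mathcomp Require Import reals.
Set Implicit Arguments. Unset Strict Implicit. Unset Printing Implicit Defensive.
Import Order.TTheory GRing.Theory Num.Theory.
Local Open Scope ring_scope.

Section Defs.
Variable R : realType.

Definition Rlin (U V : lmodType R) (g : U -> V) : Prop :=
  forall (k : R) (x y : U), g (k *: x + y) = k *: g x + g y.

Definition Rbilin (U V W : lmodType R) (f : U -> V -> W) : Prop :=
  (forall u, Rlin (f u)) /\ (forall v, Rlin (fun u => f u v)).

Definition division_algebra (D : vectType R) (mul : D -> D -> D) : Prop :=
  Rbilin mul /\ forall a : D, a != 0 -> bijective (mul a).

(* There exist linear phi1 : R^r -> U, phi2 : R^r -> V, phi3 : W -> R^r with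
   phi3 (f (phi1 a) (phi2 b)) = (a_1 b_1, ..., a_r b_r):  r <= Q(f). *)
Definition subrank_restriction (U V W : lmodType R) (f : U -> V -> W) (r : nat)
  : Prop :=
  exists (phi1 : 'rV[R]_r -> U) (phi2 : 'rV[R]_r -> V) (phi3 : W -> 'rV[R]_r),
    [/\ Rlin phi1, Rlin phi2, Rlin phi3 &
        forall a b : 'rV[R]_r,
          phi3 (f (phi1 a) (phi2 b)) = \row_i (a 0 i * b 0 i)].

(* Q(f) <= q  (Q(f) is the largest r admitting such a restriction). *)
Definition subrank_le (U V W : lmodType R) (f : U -> V -> W) (q : nat) : Prop :=
  forall r, subrank_restriction f r -> (r <= q)%N.

Definition compmul (D : vectType R) (mul : D -> D -> D) (n : nat)
  (a b : {ffun 'I_n -> D}) : {ffun 'I_n -> D} :=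
  [ffun i => mul (a i) (b i)].

End Defs.

(* Main.v *)
Require Import Defs.
From HB Require Import structures.
From mathcomp Require Import all_boot all_order all_algebra.
From mathcomp Require Import reals.
From mathcomp Require Import zify.
Set Implicit Arguments. Unset Strict Implicit. Unset Printing Implicit Defensive.
Import Order.TTheory GRing.Theory Num.Theory.
Import VectorInternalTheory.
Local Open Scope ring_scope.

Section Lin.
Variables (R : realType) (U V : lmodType R) (f : U -> V) (Hf : Rlin f).
Definition lf (H : Rlin f) : U -> V := f.
HB.instance Definition _ := GRing.isLinear.Build R U V *:%R (lf Hf) Hf.
Lemma Rlin0 : f 0 = 0.
Proof. exact: (linear0 (lf Hf)). Qed.
Lemma RlinD x y : f (x + y) = f x + f y.
Proof. exact: (linearD (lf Hf)). Qed.
Lemma RlinZ k x : f (k *: x) = k *: f x.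
Proof. exact: (linearZZ (lf Hf)). Qed.
Lemma RlinB x y : f (x - y) = f x - f y.
Proof. exact: (linearB (lf Hf)). Qed.
End Lin.

Lemma Rlin_comp (R : realType) (U V W : lmodType R) (f : V -> W) (g : U -> V) :
  Rlin f -> Rlin g -> Rlin (fun x => f (g x)).
Proof. by move=> Hf Hg k x y; rewrite Hg Hf. Qed.

Lemma mx_ext (R : realType) m n (A B : 'M[R]_(m, n)) :
  (forall u : 'rV_m, u *m A = u *m B) -> A = B.
Proof. by move=> H; apply/row_matrixP => i; rewrite !rowE H. Qed.

Lemma lin1E (R : realType) m n (f : 'rV[R]_m -> 'rV[R]_n) (Hf : Rlin f) u :
  u *m lin1_mx (lf Hf) = f u.
Proof. by rewrite mul_rV_lin1. Qed.

Lemma Rlin_v2r (R : realType) (vT : vectType R) : Rlin (v2r : vT -> _).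
Proof. by move=> k x y; rewrite linearP. Qed.
Lemma Rlin_r2v (R : realType) (vT : vectType R) : Rlin (r2v : _ -> vT).
Proof. by move=> k x y; rewrite linearP. Qed.
Lemma Rlin_mulmx (R : realType) m n (A : 'M[R]_(m, n)) : Rlin (fun u : 'rV_m => u *m A).
Proof. by move=> k x y; rewrite mulmxDl scalemxAl. Qed.

Notation dm a b := (\row_i (a 0 i * b 0 i)).

Lemma pivot (R : realType) k r (A : 'M[R]_(k, r)) : row_free A ->
  exists f : 'I_k -> 'I_r, injective f /\
  exists B : 'M[R]_(k, r), colsub f B = 1%:M /\ (B <= A)%MS.
Proof.
move=> fA.
have fAt : row_full A^T by rewrite /row_full mxrank_tr; exact: fA.
pose f := fullrankfun fAt.
exists f; split; first exact: fullrankfun_inj.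
have U : colsub f A \in unitmx.
  have := fullrowsub_unit fAt; rewrite -/f.
  have -> : rowsub f A^T = (colsub f A)^T by apply/matrixP => i j; rewrite !mxE.
  by rewrite unitmx_tr.
exists (invmx (colsub f A) *m A); split; last exact: submxMl.
by rewrite -mulmx_colsub mulVmx.
Qed.

Definition mxof (R : realType) m p (f : 'rV[R]_m -> 'rV[R]_p) (H : Rlin f) :=
  lin1_mx (lf H).
Lemma mxofE (R : realType) m p (f : 'rV[R]_m -> 'rV[R]_p) (H : Rlin f) u :
  u *m mxof H = f u.
Proof. by rewrite mul_rV_lin1. Qed.

Lemma rank_sum (R : realType) (I : finType) (P : {pred I}) m p (M : I -> 'M[R]_(m, p)) :
  (\rank (\sum_(i in P) M i)%R <= \sum_(i in P) \rank (M i))%N.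
Proof.
apply: (big_ind2 (fun (A : 'M[R]_(m, p)) k => (\rank A <= k)%N)) => //.
  by rewrite mxrank0.
move=> A a B b HA HB.
exact: leq_trans (mxrank_add _ _) (leq_add HA HB).
Qed.

Section Pf.
Variables (R : realType) (k r : nat) (f : 'I_k -> 'I_r).
Hypothesis finj : injective f.
Definition Pf : 'M[R]_(k, r) := \matrix_(j, l) ((f j == l)%:R).
Lemma PfE (u : 'rV[R]_k) l :
  (u *m Pf) 0 l = if [pick j | f j == l] is Some j then u 0 j else 0.
Proof.
rewrite mxE; case: pickP => [j /eqP <- | none].
  rewrite (bigD1 j) //= big1 ?addr0; first by rewrite mxE eqxx mulr1.
  by move=> i ij; rewrite mxE (inj_eq finj) (negbTE ij) mulr0.
by rewrite big1 // => i _; rewrite mxE none mulr0.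
Qed.
Lemma Pf_f (u : 'rV[R]_k) j : (u *m Pf) 0 (f j) = u 0 j.
Proof.
rewrite PfE; case: pickP => [j' /eqP /finj -> // | /(_ j)]; by rewrite eqxx.
Qed.
Lemma dm_Pf (a b : 'rV[R]_k) : dm (a *m Pf) (b *m Pf) = (dm a b) *m Pf.
Proof.
apply/rowP => l; rewrite [LHS]mxE !PfE; case: pickP => [j _|_]; last by rewrite mulr0.
by rewrite mxE.
Qed.
Lemma Pf_tr (B : 'M[R]_(k, r)) : colsub f B = 1%:M -> Pf *m B^T = 1%:M.
Proof.
move=> HB; apply/matrixP => j j'.
have -> : (Pf *m B^T) j j' = B j' (f j).
  rewrite mxE (bigD1 (f j)) //= big1 ?addr0; first by rewrite !mxE eqxx mul1r.
  by move=> l lj; rewrite !mxE eq_sym (negbTE lj) mul0r.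
by have := congr1 (fun M : 'M[R]_k => M j' j) HB; rewrite !mxE eq_sym.
Qed.
End Pf.

Lemma Rlin_row_f (R : realType) (W : lmodType R) r k (f : 'I_k -> 'I_r)
  (g : W -> 'rV[R]_r) : Rlin g -> Rlin (fun z => \row_j (g z) 0 (f j)).
Proof. by move=> Hg c x y; apply/rowP => j; rewrite !mxE Hg !mxE. Qed.

Section Main.
Variables (R : realType) (D : vectType R) (mul : D -> D -> D) (n : nat).
Hypothesis Hdiv : division_algebra mul.
Local Notation E := {ffun 'I_n -> D}.

Definition prj (S : {set 'I_n}) (v : E) : E :=
  [ffun i => if i \in S then v i else 0].

Definition Hyp (S : {set 'I_n}) r := exists (p1 : 'rV[R]_r -> E)
  (p2 : 'rV[R]_r -> E) (p3 : E -> 'rV[R]_r),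
  [/\ Rlin p1, Rlin p2, Rlin p3 &
   forall a b, p3 (prj S (compmul mul (p1 a) (p2 b))) = dm a b].

Lemma extract2 S r k (p1 p2 : 'rV[R]_r -> E) (p3 : E -> 'rV[R]_r)
  (Bm : 'M[R]_(k, r)) : Rlin p1 -> Rlin p2 -> Rlin p3 -> row_free Bm ->
  (forall a (u : 'rV_k), p3 (prj S (compmul mul (p1 a) (p2 (u *m Bm))))
     = dm a (u *m Bm)) -> Hyp S k.
Proof.
move=> H1 H2 H3 fB HB.
have [f [finj [B [HBf /submxP [W defB]]]]] := pivot fB.
exists (fun a => p1 (a *m Pf R f)), (fun b => p2 ((b *m W) *m Bm)),
  (fun z => \row_j (p3 z) 0 (f j)); split.
- by move=> c0 x y; rewrite mulmxDl -scalemxAl H1.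
- by move=> c x y; rewrite !mulmxDl -!scalemxAl H2.
- exact: Rlin_row_f.
move=> a b; rewrite HB; apply/rowP => j. rewrite mxE [X in X = _]mxE Pf_f // [RHS]mxE.
congr (_ * _); rewrite -mulmxA -defB.
have := congr1 (fun M : 'rV[R]_k => M 0 j) (mulmx_colsub f b B).
by rewrite HBf mulmx1 mxE => <-.
Qed.

Lemma extract3 S r c (p1 p2 : 'rV[R]_r -> E) (p3 : E -> 'rV[R]_r)
  (Cm : 'M[R]_(c, r)) : Rlin p1 -> Rlin p2 -> Rlin p3 ->
  (forall a b, (p3 (prj S (compmul mul (p1 a) (p2 b))) - dm a b <= Cm)%MS) ->
  Hyp S (r - \rank Cm).
Proof.
move=> H1 H2 H3 HC.
rewrite -(mxrank_tr Cm) -mxrank_ker.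
have [f [finj [B [HBf sB]]]] := pivot (row_base_free (kermx Cm^T)).
have BC : B *m Cm^T = 0.
  apply/sub_kermxP; apply: submx_trans sB _; by rewrite eq_row_base.
exists (fun a => p1 (a *m Pf R f)), (fun b => p2 (b *m Pf R f)),
  (fun z => p3 z *m B^T); split.
- by move=> c0 x y; rewrite mulmxDl -scalemxAl H1.
- by move=> c0 x y; rewrite mulmxDl -scalemxAl H2.
- by move=> c0 x y; rewrite H3 mulmxDl scalemxAl.
move=> a b.
have /submxP [X HX] := HC (a *m Pf R f) (b *m Pf R f).
move/eqP: HX; rewrite subr_eq => /eqP ->.
rewrite mulmxDl -mulmxA -[Cm *m B^T]trmxK trmx_mul trmxK BC trmx0 mulmx0 add0r.
by rewrite dm_Pf // -mulmxA Pf_tr // mulmx1.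
Qed.

Let Hm1 u : Rlin (mul u). Proof. by case: Hdiv => [[H _] _]. Qed.
Let Hm2 v : Rlin (fun u => mul u v). Proof. by case: Hdiv => [[_ H] _]. Qed.
Lemma mul_u0 u : mul u 0 = 0. Proof. exact: Rlin0 (Hm1 u). Qed.
Lemma mul_0v v : mul 0 v = 0. Proof. exact: Rlin0 (Hm2 v). Qed.
Lemma mul_inj u y : u != 0 -> mul u y = 0 -> y = 0.
Proof.
move=> /(proj2 Hdiv) [g K1 K2] H.
by apply: (can_inj K1); rewrite H mul_u0.
Qed.

Lemma prj_cm S u v : prj S (compmul mul u v) = compmul mul u (prj S v).
Proof. by apply/ffunP => i; rewrite !ffunE; case: ifP; rewrite ?mul_u0. Qed.
Lemma prj_cml S u v : prj S (compmul mul u v) = compmul mul (prj S u) v.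
Proof. by apply/ffunP => i; rewrite !ffunE; case: ifP; rewrite ?mul_0v. Qed.
Lemma prj_prj T v : prj T (prj T v) = prj T v.
Proof. by apply/ffunP => i; rewrite /prj !ffunE; case: (i \in T). Qed.
Lemma prj_split (S T : {set 'I_n}) w : T \subset S -> prj S w = prj (S :\: T) w + prj T w.
Proof.
move=> /fintype.subsetP TS; apply/ffunP => i; rewrite !ffunE !inE.
case iT: (i \in T); first by rewrite (TS _ iT) /= add0r.
by rewrite /= addr0.
Qed.
Lemma prj0 (w : E) : prj set0 w = 0.
Proof. by apply/ffunP => i; rewrite !ffunE inE. Qed.
Lemma cm0 (v : E) : compmul mul 0 v = 0.
Proof. by apply/ffunP => i; rewrite !ffunE mul_0v. Qed.
Lemma cmr0 (v : E) : compmul mul v 0 = 0.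
Proof. by apply/ffunP => i; rewrite !ffunE mul_u0. Qed.

Lemma Rlin_prj S : Rlin (prj S).
Proof.
move=> k x y; apply/ffunP => i; rewrite !ffunE; case: ifP => _ //.
by rewrite scaler0 addr0.
Qed.
Lemma Rlin_cm (x : E) : Rlin (compmul mul x).
Proof. by move=> k u v; apply/ffunP => i; rewrite !ffunE Hm1. Qed.

Definition single (s : 'I_n) (d : D) : E := [ffun i => if i == s then d else 0].
Lemma Rlin_single s : Rlin (single s).
Proof.
move=> k x y; apply/ffunP => i; rewrite !ffunE; case: ifP => _ //.
by rewrite scaler0 addr0.
Qed.
Lemma Rlin_ev s : Rlin (fun v : E => v s).
Proof. by move=> k x y; rewrite !ffunE. Qed.

Lemma prj_sum T v : prj T v = \sum_(s in T) single s (v s).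
Proof.
apply/ffunP => i; rewrite sum_ffunE !ffunE.
case iT: (i \in T).
  rewrite (bigD1 i) //= big1 ?addr0; first by rewrite ffunE eqxx.
  by move=> j /andP [_ ji]; rewrite ffunE eq_sym (negbTE ji).
by rewrite big1 // => j jT; rewrite ffunE; case: eqP => // ij; rewrite ij jT in iT.
Qed.

Lemma rank_prj T (H : Rlin (fun z => v2r (prj T (r2v z : E)))) :
  (\rank (mxof H) <= #|T| * \dim {:D})%N.
Proof.
pose A s := mxof (Rlin_comp (@Rlin_v2r R D) (Rlin_comp (Rlin_ev s) (@Rlin_r2v R E))).
pose B s := mxof (Rlin_comp (@Rlin_v2r R E) (Rlin_comp (Rlin_single s) (@Rlin_r2v R D))).
have -> : mxof H = \sum_(s in T) (A s *m B s).
  apply: mx_ext => u; rewrite mxofE mulmx_sumr prj_sum linear_sum.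
  by apply: eq_bigr => s _; rewrite mulmxA !mxofE /= v2rK.
apply: leq_trans (rank_sum _ _) _.
rewrite -sum_nat_const dimvf; apply: leq_sum => s _.
exact: leq_trans (mxrankM_maxr _ _) (rank_leq_row _).
Qed.

Lemma main_step (Heven : ~~ odd (\dim {:D})) k : forall (S : {set 'I_n}) r, (#|S| < k)%N -> Hyp S r ->
  (2 * r <= #|S| * \dim {:D})%N.
Proof.
elim: k => [//|k IH] S r ltk [p1 [p2 [p3 [H1 H2 H3 Hp]]]].
case: r p1 p2 p3 H1 H2 H3 Hp => [|r'] p1 p2 p3 H1 H2 H3 Hp; first by rewrite muln0.
pose e1 : 'rV[R]_r'.+1 := delta_mx 0 0.
pose x := prj S (p1 e1).
pose T := [set s | x s != 0].
have TS : T \subset S.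
  apply/fintype.subsetP => s; rewrite inE /x ffunE; by case: ifP => //; rewrite eqxx.
have xT : prj T x = x.
  apply/ffunP => s; rewrite ffunE inE; case: ifP => // /negbFE /eqP ->.
  done.
have Hx b : p3 (compmul mul x (p2 b)) = dm e1 b by rewrite /x -prj_cml Hp.
clearbody x.
have T0 : T != set0.
  apply/negP => /eqP T0.
  have := Hx e1; rewrite -xT T0 prj0 cm0 (Rlin0 H3) => /rowP /(_ 0).
  by rewrite !mxE eqxx mul1r /= => /eqP; rewrite eq_sym oner_eq0.
have ltST : (#|S :\: T| < k)%N.
  have T0' : (0 < #|T|)%N by rewrite card_gt0.
  have := subset_leq_card TS.
  rewrite cardsDS //; move: ltk T0'; move: #|S| #|T| => a b; lia.
have Hg2 : Rlin (fun b => v2r (prj T (p2 b))).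
  exact: Rlin_comp (@Rlin_v2r R E) (Rlin_comp (Rlin_prj T) H2).
have HgL : Rlin (fun z => v2r (compmul mul x (r2v z))).
  exact: Rlin_comp (@Rlin_v2r R E) (Rlin_comp (Rlin_cm x) (@Rlin_r2v R E)).
have HgH : Rlin (fun z => p3 (prj T (r2v z))).
  exact: Rlin_comp H3 (Rlin_comp (Rlin_prj T) (@Rlin_r2v R E)).
have HgP : Rlin (fun z => v2r (prj T (r2v z : E))).
  exact: Rlin_comp (@Rlin_v2r R E) (Rlin_comp (Rlin_prj T) (@Rlin_r2v R E)).
pose Gm := mxof Hg2. pose Lm := mxof HgL. pose Hm := mxof HgH. pose Pm := mxof HgP.
have F1 : Gm *m Lm *m Hm = delta_mx 0 0.
  apply: mx_ext => u; rewrite !mulmxA !mxofE /= !v2rK prj_cm prj_prj -prj_cm.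
  rewrite prj_cml xT Hx; apply/rowP => j; rewrite !mxE.
  rewrite (bigD1 0) //= big1 ?addr0 => [|i /negbTE i0]; last by rewrite !mxE i0 mulr0.
  rewrite !mxE eqxx /=.
  by case: (eqVneq j 0) => [->|_]; rewrite ?eqxx ?mulr1 ?mul1r ?mul0r ?mulr0.
have v2r0 : forall vT : vectType R, (v2r : vT -> _) 0 = 0.
  by move=> vT; rewrite linear0.
have Finj : \rank (Gm *m Lm) = \rank Gm.
  apply/eqP; rewrite -[X in _ == X](mxrank_mul_ker Gm Lm) -{1}[\rank (Gm *m Lm)]addn0.
  rewrite eqn_add2l eq_sym mxrank_eq0; apply/rowV0P => v vK.
  have vG : (v <= Gm)%MS by apply: submx_trans vK _; apply: capmxSl.
  have vKer : (v <= kermx Lm)%MS by apply: submx_trans vK _; apply: capmxSr.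
  move/submxP: vG => [w Hv]; rewrite Hv; move/sub_kermxP: vKer; rewrite Hv !mxofE /= v2rK -(v2r0 E) => /v2r_inj Hz.
  suff -> : prj T (p2 w) = 0 by rewrite v2r0.
  apply/ffunP => s; move/ffunP: Hz => /(_ s); rewrite !ffunE.
  case: ifP => sT; last by [].
  by move/mul_inj; apply; move: sT; rewrite inE.
have XP : (Gm *m Lm <= Pm)%MS.
  suff <- : Gm *m Lm *m Pm = Gm *m Lm by apply: submxMl.
  apply: mx_ext => u; rewrite !mulmxA !mxofE /= !v2rK prj_cml xT //.
have PH : Pm *m Hm = Hm.
  by apply: mx_ext => u; rewrite !mulmxA !mxofE /= !v2rK prj_prj.
have Rk : (\rank Gm + \rank Hm <= 1 + \rank Pm)%N.
  have := mxrank_mul_ker (Gm *m Lm) Hm; rewrite F1 mxrank_delta Finj => <-.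
  have := mxrank_mul_ker Pm Hm; rewrite PH => <-.
  have : (\rank (Gm *m Lm :&: kermx Hm) <= \rank (Pm :&: kermx Hm))%N.
    by apply: mxrankS; apply: capmxS.
  by move=> ab; rewrite -addnA leq_add2l addnC leq_add2l.
have RP := rank_prj HgP.
have IH1 : (2 * (r'.+1 - \rank Gm) <= #|S :\: T| * \dim {:D})%N.
  rewrite -mxrank_ker; apply: (IH _ _ ltST).
  apply: (extract2 (Bm := row_base (kermx Gm)) H1 H2 H3 (row_base_free _)).
  move=> a u.
  have : (u *m row_base (kermx Gm) <= kermx Gm)%MS.
    by apply: submx_trans (submxMl _ _) _; rewrite eq_row_base.
  move=> /sub_kermxP; rewrite mxofE -(v2r0 E) => /v2r_inj H0.
  rewrite -Hp (prj_split _ TS) (RlinD H3) (prj_cm T) H0 cmr0 (Rlin0 H3).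
  by rewrite addr0.
have IH2 : (2 * (r'.+1 - \rank Hm) <= #|S :\: T| * \dim {:D})%N.
  apply: (IH _ _ ltST).
  apply: (extract3 (Cm := Hm) H1 H2 H3) => a b.
  rewrite -Hp (prj_split _ TS) (RlinD H3) opprD addrA subrr add0r.
  set w := compmul _ _ _.
  have -> : p3 (prj T w) = v2r w *m Hm by rewrite mxofE /= v2rK.
  by rewrite -mulNmx submxMl.
have cS : #|S| = (#|S :\: T| + #|T|)%N.
  by rewrite -(cardsID T S) (setIidPr TS) addnC.
have aG := rank_leq_row Gm; have aH := rank_leq_col Hm.
have [h hm] : exists h, \dim {:D} = (2 * h)%N.
  exists (\dim {:D})./2.
  by rewrite -{1}(odd_double_half (\dim {:D})) (negbTE Heven) add0n -mul2n.
rewrite cS; move: Rk RP IH1 IH2 aG aH; rewrite hm.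
move: (\rank Gm) (\rank Hm) (\rank Pm) #|S :\: T| #|T| => a c p s t.
nia.
Qed.

End Main.

Lemma prj_setT (R : realType) (D : vectType R) n (w : {ffun 'I_n -> D}) :
  prj [set: 'I_n] w = w.
Proof. by apply/ffunP => i; rewrite ffunE inE. Qed.

From mathcomp Require Import classical_sets topology normedtype derive.
From mathcomp Require Import polyrcf.
Import numFieldNormedType.Exports.

Lemma odd_root (R : realType) (p : {poly R}) :
  p \is monic -> odd (size p).-1 -> exists x, root p x.
Proof.
move=> mp op.
have lp : lead_coef p = 1 by apply/eqP.
have lp0 : 0 < lead_coef p by rewrite lp ltr01.
have [N1 HN1] := @poly_pinfty_gt_lc R p lp0.
pose q := - (p \Po (- 'X)).
have sX : (1 < size (- 'X : {poly R}))%N by rewrite size_polyN size_polyX.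
have lq : lead_coef q = 1.
  rewrite lead_coefN lead_coef_comp // lp mul1r lead_coefN lead_coefX.
  by rewrite -signr_odd op expr1 opprK.
have lq0 : 0 < lead_coef q by rewrite lq ltr01.
have [N2 HN2] := @poly_pinfty_gt_lc R q lq0.
pose b := Num.max (Num.max N1 N2) 0.
have b1 : N1 <= b by rewrite !le_max lexx.
have b2 : N2 <= b by rewrite !le_max lexx orbT.
have b0 : 0 <= b by rewrite !le_max lexx orbT.
have pb : 1 <= p.[b] by rewrite -lp; exact: HN1.
have pmb : p.[- b] <= -1.
  have := HN2 _ b2; rewrite lq /q hornerN horner_comp hornerN hornerX.
  by rewrite lerNr.
have := @IVT R (horner p) (- b) b 0.
case.
- by rewrite lerNl (le_trans _ b0) // oppr_le0.
- by apply/continuous_subspaceT => ?; exact: continuous_horner.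
- rewrite ge_min le_max; apply/andP; split.
    by apply/orP; left; exact: le_trans pmb (lerN10 _).
  by apply/orP; right; exact: le_trans ler01 pb.
by move=> x _ px; exists x; apply/rootP.
Qed.

Lemma dim_even (R : realType) (D : vectType R) (mul : D -> D -> D) :
  division_algebra mul -> (2 <= \dim {:D})%N -> ~~ odd (\dim {:D}).
Proof.
move=> [[Hm1 Hm2] Hbij] d2; apply/negP => Hodd.
rewrite dimvf in d2 Hodd.
pose i0 : 'I_(dim D) := Ordinal (ltnW d2).
pose i1 : 'I_(dim D) := Ordinal d2.
have i01 : i0 != i1 by [].
pose M z := mxof (Rlin_comp (@Rlin_v2r R D) (Rlin_comp (Hm1 z) (@Rlin_r2v R D))).
have ME z (u : 'rV_(dim D)) : u *m M z = v2r (mul z (r2v u)) by rewrite mxofE.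
have minj z (u : 'rV_(dim D)) : z != 0 -> u *m M z = 0 -> u = 0.
  move=> /Hbij [g K1 _]; rewrite ME => H.
  have : mul z (r2v u) = mul z 0.
    by apply: v2r_inj; rewrite H (Rlin0 (Hm1 z)) raddf0.
  move/(can_inj K1) => H'; apply: r2v_inj; by rewrite H' raddf0.
pose x : D := r2v (delta_mx 0 i0).
pose y : D := r2v (delta_mx 0 i1).
have x0 : x != 0.
  apply/eqP => /(congr1 v2r); rewrite r2vK raddf0 => /matrixP /(_ 0 i0).
  by rewrite !mxE !eqxx /= => /eqP; rewrite oner_eq0.
have Ux : M x \in unitmx.
  rewrite -row_free_unit -kermx_eq0; apply/rowV0P => v /sub_kermxP.
  exact: minj.
pose A := invmx (M x) *m M y.
have [l rl] : exists l, root (char_poly A) l.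
  apply: odd_root; first exact: char_poly_monic.
  by rewrite size_char_poly.
move: rl; rewrite -eigenvalue_root_char => /eigenvalueP [v vA v0].
pose u := v *m invmx (M x).
have ux : u *m M x = v by rewrite /u -mulmxA mulVmx // mulmx1.
have uy : u *m M y = l *: (u *m M x) by rewrite ux /u -mulmxA vA.
have yx : y - l *: x != 0.
  apply/eqP => /(congr1 v2r); rewrite (linearB (v2r : D -> _)) (linearZZ (v2r : D -> _)) /= !r2vK raddf0.
  move=> /matrixP /(_ 0 i1); rewrite !mxE !eqxx /= mulr0 subr0.
  by move/eqP; rewrite oner_eq0.
have : u *m M (y - l *: x) = 0.
  rewrite ME (RlinB (Hm2 _)) (RlinZ (Hm2 _)).
  move: uy; rewrite !ME -(linearZZ (v2r : D -> _)) => /v2r_inj ->.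
  by rewrite subrr raddf0.
move/(minj _ _ yx) => u0.
by move: v0; rewrite -ux u0 mul0mx eqxx.
Qed.

Theorem theorem5p3 (R : realType) (D : vectType R) (mul : D -> D -> D)
  (n : nat) :
  division_algebra mul ->
  (2 <= \dim {:D})%N ->
  forall r : nat, subrank_restriction (@compmul R D mul n) r ->
  (2 * r <= n * \dim {:D})%N.
Proof.
move=> Hdiv d2 r [p1 [p2 [p3 [H1 H2 H3 Hp]]]].
have Hev := dim_even Hdiv d2.
have HS : Hyp mul [set: 'I_n] r.
  exists p1, p2, p3; split => // a b; by rewrite prj_setT Hp.
have := main_step Hdiv Hev (ltnSn _) HS.
by rewrite cardsT card_ord.
Qed.
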